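(* Let $\Gamma$ and $G$ be finite nilpotent groups of order $n$, with Sylow $p$-subgroups $\Gamma_p$ and $G_p$, so that $\Gamma=\prod_{p\mid n}\Gamma_p$ and $\mathrm{Hol}(G)=\prod_{p\mid n}\mathrm{Hol}(G_p)$. Let $\beta:\Gamma\to\mathrm{Hol}(G)$ be a homomorphism, and for primes $p,q\mid n$ let $\beta_{pq}=\pi_q\circ\beta\circ\iota_p:\Gamma_p\to\mathrm{Hol}(G_q)$, where $\iota_p:\Gamma_p\to\Gamma$ is the inclusion and $\pi_q:\mathrm{Hol}(G)\to\mathrm{Hol}(G_q)$ is the projection from the direct product decomposition. Then $\beta$ is a regular embedding if and only if $\beta_{pp}:\Gamma_p\to\mathrm{Hol}(G_p)$ is a regular embedding for each prime $p\mid n$.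
   Context: $\mathrm{Hol}(G)=\rho(G)\cdot\mathrm{Aut}(G)\subseteq\mathrm{Perm}(G)$ with $\rho(g)(x)=xg^{-1}$. Since the Sylow subgroups of a nilpotent $G$ are characteristic, $\mathrm{Aut}(G)=\prod_p\mathrm{Aut}(G_p)$ and $\mathrm{Hol}(G)=\prod_p \mathrm{Hol}(G_p)$, with $\mathrm{Hol}(G_p)$ acting on the factor $G_p$ of $G=\prod_p G_p$. A homomorphism $\beta:\Gamma\to\mathrm{Hol}(G)$ is a regular embedding if it is injective and its image acts regularly (simply transitively) on $G$. *)

(* Defs.v *)
From mathcomp Require Import all_boot all_fingroup all_solvable.
Set Implicit Arguments. Unset Strict Implicit. Unset Printing Implicit Defensive.
Import GroupScope.
Local Open Scope group_scope.

Section Holomorph.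
Variable hT : finGroupType.

Definition hol_rho (G : {set hT}) (g : hT) : {perm hT} :=
  restr_perm G (actperm 'R g^-1).

Definition Hol (G : {set hT}) : {set {perm hT}} :=
  (hol_rho G @: G) * Aut G.

(* The projection pi_q : Hol(G) -> Hol(G_q) coming from G = prod_p G_p:
   pi_q(h) acts on G_q by y |-> q-component of h(y) (identity off G_q).
   For h in Hol(G) this function is a permutation; otherwise default 1. *)
Definition hol_proj_fun (q : nat) (Gq : {set hT}) (h : {perm hT}) : hT -> hT :=
  fun y => if y \in Gq then (h y).`_q else y.

Definition hol_proj (q : nat) (Gq : {set hT}) (h : {perm hT}) : {perm hT} :=
  odflt 1 [pick s : {perm hT} | [forall y, s y == hol_proj_fun q Gq h y]].

Definition acts_regularly (S : {set {perm hT}}) (X : {set hT}) : Prop :=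
  {in X &, forall x y, exists! s, s \in S /\ s x = y}.

Definition regular_embedding (gT : finGroupType) (D : {set gT}) (X : {set hT})
    (f : gT -> {perm hT}) : Prop :=
  [/\ {in D &, {morph f : x y / x * y}}, f @: D \subset Hol X,
      {in D &, injective f} & acts_regularly (f @: D) X].

End Holomorph.

(* Main.v *)
Require Import Defs.
From mathcomp Require Import all_boot all_fingroup all_solvable.
Set Implicit Arguments. Unset Strict Implicit. Unset Printing Implicit Defensive.
Import GroupScope.
Local Open Scope group_scope.


Section Aux.
Variable hT : finGroupType.

Lemma constt_in (G : {group hT}) (pi : nat_pred) x : x \in G -> x.`_pi \in G.
Proof. by move=> Gx; apply: (subsetP _ _ (cycle_constt pi x)); rewrite cycle_subG. Qed.

Lemma nil_consttM (G : {group hT}) (p : nat) x y : nilpotent G ->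
  x \in G -> y \in G -> (x * y).`_p = x.`_p * y.`_p.
Proof.
move=> nilG Gx Gy.
have HP := nilpotent_pcore_Hall p nilG.
have HQ := nilpotent_pcore_Hall p^' nilG.
have inP z : z \in G -> z.`_p \in 'O_p(G).
  by move=> Gz; rewrite (mem_normal_Hall HP (pcore_normal _ _)) ?constt_in ?p_elt_constt.
have inQ z : z \in G -> z.`_p^' \in 'O_p^'(G).
  by move=> Gz; rewrite (mem_normal_Hall HQ (pcore_normal _ _)) ?constt_in ?p_elt_constt.
have [_ _ cPQ _] := dprodP (nilpotent_pcoreC p nilG).
have cxy : commute (x.`_p^') (y.`_p).
  exact: (centP (subsetP cPQ _ (inQ _ Gx))) _ (inP _ Gy).
have E : x * y = (x.`_p * y.`_p) * (x.`_p^' * y.`_p^').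
  rewrite -{1}(consttC p x).
  rewrite -{1}(consttC p y).
  by rewrite !mulgA -(mulgA x.`_p) cxy !mulgA.
have c2 : commute (x.`_p * y.`_p) (x.`_p^' * y.`_p^').
  apply: commute_sym; apply: (centP (subsetP cPQ _ _)).
    by rewrite groupM ?inQ.
  by rewrite groupM ?inP.
rewrite E consttM // constt_p_elt; last first.
  by apply: (mem_p_elt (pcore_pgroup p G)); rewrite groupM ?inP.
have -> : (x.`_p^' * y.`_p^').`_p = 1.
  by apply/constt1P; apply: (mem_p_elt (pcore_pgroup p^' G)); rewrite groupM ?inQ.
by rewrite mulg1.
Qed.

Lemma hol_form (G : {group hT}) h : h \in Hol G ->
  exists2 a, a \in Aut G & exists2 c, c \in G & {in G, forall y, h y = a y * c}.
Proof.
case/mulsgP=> r a /imsetP[g Gg ->] Aa ->.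
exists a => //; exists (a g^-1); first by rewrite Aut_closed ?groupV.
move=> y Gy; rewrite permM /hol_rho restr_permE //=; last first.
  apply/astabsP=> x; rewrite /= apermE actpermE /= groupMr ?groupV //.
rewrite actpermE /=.
by rewrite -(autmE Aa) morphM ?groupV.
Qed.

Lemma rho_in (X : {group hT}) g y : g \in X -> y \in X -> hol_rho X g y = y * g^-1.
Proof.
move=> Xg Xy; rewrite /hol_rho restr_permE ?actpermE //.
by apply/astabsP=> x; rewrite /= apermE actpermE /= groupMr ?groupV.
Qed.

Lemma rho_out (X : {set hT}) g y : y \notin X -> hol_rho X g y = y.
Proof. by move=> nXy; rewrite /hol_rho (out_perm (restr_perm_on _ _)). Qed.

Section Proj.
Variables (G : {group hT}) (p : nat).
Hypothesis nilG : nilpotent G.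
Local Notation Gp := 'O_p(G).

Lemma in_Op x : x \in G -> (x \in Gp) = p.-elt x.
Proof. exact: mem_normal_Hall (nilpotent_pcore_Hall p nilG) (pcore_normal _ _). Qed.

Lemma constt_Op x : x \in G -> x.`_p \in Gp.
Proof. by move=> Gx; rewrite in_Op ?constt_in ?p_elt_constt. Qed.

Lemma Op_G x : x \in Gp -> x \in G.
Proof. exact: (subsetP (pcore_sub _ _)). Qed.

Lemma Op_constt x : x \in Gp -> x.`_p = x.
Proof. by move=> Gpx; rewrite constt_p_elt // (mem_p_elt (pcore_pgroup p G)). Qed.

Lemma aut_Op a x : a \in Aut G -> (a x \in Gp) = (x \in Gp).
Proof.
move=> Aa; case Gx: (x \in G); last by rewrite (out_Aut Aa) ?Gx.
rewrite !in_Op ?Aut_closed // /p_elt.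
by rewrite -{1}(autmE Aa) (order_injm (injm_autm Aa) Gx).
Qed.

Lemma hol_into h y : h \in Hol G -> y \in G -> h y \in G.
Proof.
case/hol_form=> a Aa [c Gc hE] Gy; rewrite hE // groupM ?Aut_closed //.
Qed.

Lemma hol_cform h : h \in Hol G ->
  exists2 a, a \in Aut G & exists2 c, c \in G &
    {in G, forall y, (h y).`_p = a y.`_p * c.`_p}.
Proof.
case/hol_form=> a Aa [c Gc hE]; exists a => //; exists c => // y Gy.
rewrite hE // (nil_consttM p nilG) ?Aut_closed //.
by rewrite -(autmE Aa) morph_constt.
Qed.

Lemma hol_constt h y : h \in Hol G -> y \in G -> (h y).`_p = (h y.`_p).`_p.
Proof.
move=> Hh Gy; have [a Aa [c Gc E]] := hol_cform Hh.
by rewrite !E ?constt_in // (Op_constt (constt_Op Gy)).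
Qed.

Lemma projf_in h y : h \in Hol G -> y \in Gp -> hol_proj_fun p Gp h y \in Gp.
Proof.
by move=> Hh Gpy; rewrite /hol_proj_fun Gpy constt_Op ?hol_into ?Op_G.
Qed.

Lemma projf_inj h : h \in Hol G -> injective (hol_proj_fun p Gp h).
Proof.
move=> Hh y z; have [a Aa [c Gc E]] := hol_cform Hh.
have := projf_in Hh; rewrite /hol_proj_fun.
case Gpy: (y \in Gp); case Gpz: (z \in Gp) => inG.
- rewrite !E ?Op_G // (Op_constt Gpy) (Op_constt Gpz) => /mulIg; exact: perm_inj.
- by move=> eq; have := inG y Gpy; rewrite Gpy eq Gpz.
- by move=> eq; have := inG z Gpz; rewrite Gpz -eq Gpy.
- by [].
Qed.

Lemma hol_projE h : h \in Hol G -> hol_proj p Gp h =1 hol_proj_fun p Gp h.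
Proof.
move=> Hh y; rewrite /hol_proj; case: pickP => [s /forallP E | none].
  by move: (E y) => /eqP.
exfalso; move: (none (perm (projf_inj Hh))) => /negP; apply.
by apply/forallP=> z; rewrite permE.
Qed.

Lemma hol_proj1 h : h \in Hol G -> hol_proj p Gp h 1 = (h 1).`_p.
Proof. by move=> Hh; rewrite hol_projE // /hol_proj_fun group1. Qed.

Lemma hol_projM h k : h \in Hol G -> k \in Hol G -> h * k \in Hol G ->
  hol_proj p Gp (h * k) = hol_proj p Gp h * hol_proj p Gp k.
Proof.
move=> Hh Hk Hhk; apply/permP=> y; rewrite permM !hol_projE //.
rewrite /hol_proj_fun; case Gpy: (y \in Gp) => //=.
have := projf_in Hh Gpy; rewrite /hol_proj_fun Gpy => ->.
  by rewrite permM (hol_constt Hk (hol_into Hh (Op_G Gpy))).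
by rewrite Gpy.
Qed.

Lemma hol_proj_Hol h : h \in Hol G -> hol_proj p Gp h \in Hol Gp.
Proof.
move=> Hh; have [a Aa [c Gc E]] := hol_cform Hh.
have sGpG : Gp \subset G := pcore_sub _ _.
have nGa : a \in 'N(Gp | 'P).
  by apply/astabsP=> x; rewrite /= apermE aut_Op.
set g := (a^-1 c.`_p)^-1.
have Gpg0 : a^-1 c.`_p \in Gp by rewrite aut_Op ?groupV ?constt_Op.
have Gpg : g \in Gp by rewrite groupV.
suff -> : hol_proj p Gp h = hol_rho Gp g * restr_perm Gp a.
  by rewrite mem_mulg ?(imset_f (hol_rho Gp) Gpg) ?(Aut_restr_perm sGpG Aa).
apply/permP=> y; rewrite hol_projE // permM /hol_proj_fun.
case Gpy: (y \in Gp); last first.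
  by rewrite rho_out ?Gpy // (out_perm (restr_perm_on _ _)) ?Gpy.
rewrite rho_in // restr_permE ?groupM ?groupV //.
rewrite E ?Op_G // Op_constt // -(autmE Aa) morphM ?Op_G ?groupV ?Gpg0 //.
by rewrite invgK /= autmE permKV.
Qed.

End Proj.

Section RE.
Variables (gT : finGroupType) (D : {group gT}) (X : {group hT}).
Variable f : gT -> {perm hT}.
Hypothesis fM : {in D &, {morph f : x y / x * y}}.

Lemma re_f1 : f 1 = 1.
Proof. by apply/(mulgI (f 1)); rewrite -fM ?group1 // !mulg1. Qed.

Lemma re_fV d : d \in D -> f d^-1 = (f d)^-1.
Proof.
move=> Dd; apply/(mulgI (f d)); rewrite -fM ?groupV // mulgV mulgV.
exact: re_f1.
Qed.

Lemma re_intro : f @: D \subset Hol X -> #|D| = #|X| ->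
  (forall d, d \in D -> f d 1 \in X) ->
  (forall d, d \in D -> f d 1 = 1 -> d = 1) -> regular_embedding D X f.
Proof.
move=> sH cDX fX free.
have inj1 : {in D &, forall d e, f d 1 = f e 1 -> d = e}.
  move=> d e Dd De E; apply/eqP; rewrite eq_mulgV1; apply/eqP/free.
    by rewrite groupM ?groupV.
  by rewrite fM ?groupV // permM E re_fV // permK.
have sur : forall x, x \in X -> exists2 d, d \in D & f d 1 = x.
  have eqI : [set f d 1 | d in D] = X.
    apply/eqP; rewrite eqEcard card_in_imset // cDX leqnn andbT.
    by apply/subsetP=> _ /imsetP[d Dd ->]; apply: fX.
  by move=> x; rewrite -eqI => /imsetP[d Dd ->]; exists d.
split=> //.
  by move=> d e Dd De E; apply: inj1 => //; rewrite E.
move=> x y Xx Xy.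
have [d Dd dx] := sur x Xx; have [e De ey] := sur y Xy.
exists (f (d^-1 * e)); split.
  split; first by rewrite imset_f ?groupM ?groupV.
  by rewrite fM ?groupV // permM re_fV // -dx permK.
move=> _ [/imsetP[u Du ->] ux].
congr f; apply: (mulgI d); rewrite mulgA mulgV mul1g.
apply: inj1; rewrite ?groupM //.
by rewrite fM // permM dx ux.
Qed.

Lemma re_trans : regular_embedding D X f ->
  forall x, x \in X -> exists2 d, d \in D & f d 1 = x.
Proof.
case=> _ _ _ reg x Xx; have [s [[/imsetP[d Dd ->] E] _]] := reg 1 x (group1 _) Xx.
by exists d.
Qed.
End RE.
End Aux.

Section Main.
Variables (gT hT : finGroupType) (Gam : {group gT}) (G : {group hT}).
Hypotheses (nilGam : nilpotent Gam) (nilG : nilpotent G) (cardE : #|Gam| = #|G|).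
Variable beta : {morphism Gam >-> {perm hT}}.
Hypothesis betaHol : beta @* Gam \subset Hol G.
Variable p : nat.

Local Notation rho := (fun x => hol_proj p 'O_p(G) (beta x)).

Lemma bH x : x \in Gam -> beta x \in Hol G.
Proof. by move=> Gx; apply: (subsetP betaHol); rewrite mem_morphim. Qed.

Lemma rhoM : {in Gam &, {morph rho : x y / x * y}}.
Proof.
move=> x y Gx Gy /=; rewrite morphM // hol_projM ?bH //.
by rewrite -morphM ?bH ?groupM.
Qed.

Lemma rho1 x : x \in Gam -> rho x 1 = (beta x 1).`_p.
Proof. by move=> Gx; rewrite /= hol_proj1 ?bH. Qed.

Lemma rho1_in x : x \in Gam -> rho x 1 \in 'O_p(G).
Proof. by move=> Gx; rewrite rho1 // constt_Op // hol_into ?bH. Qed.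

Lemma stab_lemma :
  (forall z, z \in 'O_p(G) -> exists2 g, g \in Gam & rho g 1 = z) ->
  forall g, g \in Gam -> rho g 1 = 1 -> p^'.-elt g.
Proof.
move=> tr g Gg g1.
pose rm := Morphism rhoM.
pose to := morph_action rm.
have orbE : orbit to Gam 1 = 'O_p(G).
  apply/eqP; rewrite eqEsubset; apply/andP; split.
    by apply/subsetP=> _ /imsetP[h Gh ->]; rewrite /= mactE /= rho1_in.
  apply/subsetP=> z /tr[h Gh <-]; apply/imsetP; exists h => //.
have := @card_orbit_in_stab _ _ _ to _ 1 (subxx Gam); rewrite orbE.
rewrite (card_Hall (nilpotent_pcore_Hall p nilG)) cardE.
rewrite -{2}(partnC p (cardG_gt0 G)) => /eqP; rewrite eqn_pmul2l ?part_gt0 // => /eqP cS.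
have Sg : g \in 'C_Gam[1 | to].
  by rewrite !inE Gg sub1set inE /= mactE /= g1 eqxx.
apply: pnat_dvd (order_dvdG Sg) _; rewrite cS; exact: part_pnat.
Qed.

End Main.

Unset Implicit Arguments. Set Strict Implicit. Set Printing Implicit Defensive.

Theorem lemma2p2 (gT hT : finGroupType) (Gam : {group gT}) (G : {group hT})
  (nilGam : nilpotent Gam) (nilG : nilpotent G) (cardE : #|Gam| = #|G|)
  (beta : {morphism Gam >-> {perm hT}}) (betaHol : beta @* Gam \subset Hol G) :
  regular_embedding Gam G beta <->
  (forall p : nat, prime p -> p %| #|G| ->
     regular_embedding 'O_p(Gam) 'O_p(G)
       (fun x => hol_proj p 'O_p(G) (beta x))).
Proof.
have sOG (p : nat) : 'O_p(Gam) \subset Gam := pcore_sub _ _.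
split.
- move=> LHS p pr pdv; apply: re_intro.
  + by move=> x y Ox Oy; apply: (rhoM nilG betaHol p); apply: (subsetP (sOG p)).
  + apply/subsetP=> _ /imsetP[x Ox ->].
    exact: (hol_proj_Hol p nilG (bH betaHol (subsetP (sOG p) _ Ox))).
  + by rewrite (card_Hall (nilpotent_pcore_Hall p nilGam))
               (card_Hall (nilpotent_pcore_Hall p nilG)) cardE.
  + by move=> d Od; exact: (rho1_in nilG betaHol p (subsetP (sOG p) _ Od)).
  move=> d Od d1; have Gd := subsetP (sOG p) _ Od.
  have p'd : p^'.-elt d.
    apply: (stab_lemma nilG cardE betaHol _ Gd d1) => z Oz.
    have [g Gg gz] := re_trans LHS (subsetP (pcore_sub _ _) _ Oz).
    by exists g => //; rewrite (rho1 nilG betaHol p Gg) gz (Op_constt Oz).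
  have pd : p.-elt d := mem_p_elt (pcore_pgroup _ _) Od.
  by apply/eqP; rewrite -order_eq1; apply/eqP; apply: pnat_1 pd p'd.
- move=> RHS; apply: re_intro.
  + by move=> x y Gx Gy; rewrite morphM.
  + by rewrite -morphimEdom.
  + exact: cardE.
  + by move=> d Gd; rewrite hol_into ?group1 ?(bH betaHol).
  move=> d Gd d1.
  have p'd p : prime p -> p %| #|G| -> p^'.-elt d.
    move=> pr pdv.
    apply: (stab_lemma nilG cardE betaHol _ Gd) => [z Oz|].
      have [g Og gz] := re_trans (RHS p pr pdv) Oz.
      by exists g => //; apply: (subsetP (sOG p)).
    by rewrite rho1 // d1 constt1.
  apply/eqP; rewrite -order_eq1; apply/negPn/negP => nt.
  have lt1 : 1 < #[d] by rewrite ltn_neqAle eq_sym nt order_gt0.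
  set q := pdiv #[d].
  have qpr : prime q := pdiv_prime lt1.
  have qd : q %| #[d] := pdiv_dvd _.
  have qG : q %| #|G| by rewrite -cardE (dvdn_trans qd (order_dvdG Gd)).
  by have := p'd q qpr qG; rewrite /p_elt p'natE // qd.
Qed.
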